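(* Let $(\mathrm{Con},\sqsubseteq,(s_i)_{i\in G})$ be a spatial constraint system with distributed spaces $(\Delta_I)_{I\subseteq G}$, let $I\subseteq G$ and $c,e\in\mathrm{Con}$, and suppose $c\sqsupseteq\Delta_I(e)$. If $e$ is compact and $\pi_I(c)\sqsupseteq e$, then there exists a finite set $J\subseteq I$ such that $c\sqsupseteq\Delta_J(e)$.
   Context: A constraint system (cs) is a complete lattice $(\mathrm{Con},\sqsubseteq)$ with join $\sqcup$, bottom $\mathit{true}$. A space function is a continuous (directed-join preserving) self-map $f$ on $\mathrm{Con}$ with $f(\mathit{true})=\mathit{true}$ and $f(c\sqcup d)=f(c)\sqcup f(d)$; $\mathcal{S}(\mathrm{Con})$ denotes the set of space functions ordered pointwise ($f\preceq g$ iff $f(c)\sqsubseteq g(c)$ for all $c$). A spatial constraint system $(\mathrm{Con},\sqsubseteq,(s_i)_{i\in G})$ is a cs with space functions $s_i$ indexed by an arbitrary (possibly infinite) set $G$. Distributed spaces: $\Delta_I=\max\{f\in\mathcal{S}(\mathrm{Con}) : f\preceq s_i\text{ for all }i\in I\}$ (this maximum exists). $\pi_i(c)=\bigsqcup\{e' : c\sqsupseteq s_i(e')\}$ and $\pi_I(c)=\bigsqcup\{\pi_i(c): i\in I\}$. An element $e$ is compact if for every directed set $D\subseteq\mathrm{Con}$, $e\sqsubseteq\bigsqcup D$ implies $e\sqsubseteq d$ for some $d\in D$. *)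

(* Defs.v *)
From Stdlib Require Import List.
Set Implicit Arguments.

Section SCS.
Variable T : Type.
Variable le : T -> T -> Prop.
Variable sup : (T -> Prop) -> T.

Definition is_complete_lattice : Prop :=
  (forall x, le x x) /\
  (forall x y z, le x y -> le y z -> le x z) /\
  (forall x y, le x y -> le y x -> x = y) /\
  (forall S x, S x -> le x (sup S)) /\
  (forall S u, (forall x, S x -> le x u) -> le (sup S) u).

Definition join (x y : T) : T := sup (fun z => z = x \/ z = y).
Definition bot : T := sup (fun _ => False).

Definition directed (D : T -> Prop) : Prop :=
  (exists d, D d) /\
  (forall x y, D x -> D y -> exists z, D z /\ le x z /\ le y z).

Definition continuous (f : T -> T) : Prop :=
  forall D, directed D -> f (sup D) = sup (fun y => exists x, D x /\ y = f x).

Definition space_fun (f : T -> T) : Prop :=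
  continuous f /\ f bot = bot /\ (forall c d, f (join c d) = join (f c) (f d)).

Definition fle (f g : T -> T) : Prop := forall c, le (f c) (g c).

Definition compact (e : T) : Prop :=
  forall D, directed D -> le e (sup D) -> exists d, D d /\ le e d.

Variable G : Type.
Variable s : G -> T -> T.

Definition is_distributed_space (I : G -> Prop) (f : T -> T) : Prop :=
  (space_fun f /\ (forall i, I i -> fle f (s i))) /\
  (forall g, space_fun g -> (forall i, I i -> fle g (s i)) -> fle g f).

Definition pi_i (i : G) (c : T) : T := sup (fun e' => le (s i e') c).
Definition pi_I (I : G -> Prop) (c : T) : T :=
  sup (fun y => exists i, I i /\ y = pi_i i c).
End SCS.

Definition finite_set (G : Type) (J : G -> Prop) : Prop :=
  exists l : list G, forall x, J x -> In x l.

(* Main.v *)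
Require Import Defs.
From Stdlib Require Import List.

Section Aux.
Variable T : Type.
Variable le : T -> T -> Prop.
Variable sup : (T -> Prop) -> T.
Hypothesis HL : is_complete_lattice le sup.

Lemma le_refl x : le x x. Proof. destruct HL as [H _]; auto. Qed.
Lemma le_trans x y z : le x y -> le y z -> le x z.
Proof. destruct HL as [_ [H _]]; eauto. Qed.
Lemma le_anti x y : le x y -> le y x -> x = y.
Proof. destruct HL as [_ [_ [H _]]]; auto. Qed.
Lemma le_sup S x : S x -> le x (sup S).
Proof. destruct HL as [_ [_ [_ [H _]]]]; auto. Qed.
Lemma sup_le S u : (forall x, S x -> le x u) -> le (sup S) u.
Proof. destruct HL as [_ [_ [_ [_ H]]]]; auto. Qed.

Lemma join_l x y : le x (join sup x y). Proof. apply le_sup; auto. Qed.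
Lemma join_r x y : le y (join sup x y). Proof. apply le_sup; auto. Qed.
Lemma join_lub x y u : le x u -> le y u -> le (join sup x y) u.
Proof. intros; apply sup_le; intros z [->| ->]; auto. Qed.
Lemma bot_le u : le (bot sup) u.
Proof. apply sup_le; intros _ []. Qed.

Lemma sf_mono f : space_fun le sup f -> forall x y, le x y -> le (f x) (f y).
Proof.
  intros [_ [_ Hj]] x y Hxy.
  assert (E : join sup x y = y).
  { apply le_anti. apply join_lub; auto using le_refl. apply join_r. }
  rewrite <- E, Hj. apply join_l.
Qed.
End Aux.

Theorem mainTheorem4 (T : Type) (le : T -> T -> Prop) (sup : (T -> Prop) -> T)
  (G : Type) (s : G -> T -> T) (Delta : (G -> Prop) -> T -> T)
  (HL : is_complete_lattice le sup)
  (Hs : forall i, space_fun le sup (s i))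
  (HDelta : forall I, is_distributed_space le sup s I (Delta I))
  (I : G -> Prop) (c e : T)
  (Hce : le (Delta I e) c)
  (He : compact le sup e)
  (Hpi : le e (pi_I le sup s I c)) :
  exists J : G -> Prop, finite_set J /\ (forall j, J j -> I j) /\ le (Delta J e) c.
Proof.
  set (F := fun l => fold_right (fun i acc => join sup (pi_i le sup s i c) acc) (bot sup) l).
  assert (Fub : forall l u, (forall i, In i l -> le (pi_i le sup s i c) u) -> le (F l) u).
  { induction l as [|a l IH]; intros u H; simpl.
    - apply bot_le; auto.
    - apply join_lub; auto. apply H; simpl; auto. apply IH; intros; apply H; simpl; auto. }
  assert (Fin : forall l i, In i l -> le (pi_i le sup s i c) (F l)).
  { induction l as [|a l IH]; intros i Hi; simpl in Hi |- *; [destruct Hi|].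
    destruct Hi as [H|H].
    - subst; apply join_l; auto.
    - eapply (@le_trans _ _ _ HL); eauto. apply join_r; auto. }
  assert (Hspi : forall i, le (s i (pi_i le sup s i c)) c).
  { intro i. destruct (Hs i) as [Hc [Hb Hj]]. unfold pi_i.
    rewrite Hc.
    - apply sup_le; auto. intros y [x [Hx ->]]; auto.
    - split.
      + exists (bot sup). rewrite Hb. apply bot_le; auto.
      + intros x y Hx Hy. exists (join sup x y). split.
        * rewrite Hj. apply join_lub; auto.
        * split; [apply join_l | apply join_r]; auto. }
  set (D := fun d => exists l, (forall i, In i l -> I i) /\ d = F l).
  assert (HD : directed le D).
  { split.
    - exists (F nil). exists nil. split; auto. intros _ [].
    - intros x y [l1 [H1 ->]] [l2 [H2 ->]]. exists (F (l1 ++ l2)). split.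
      + exists (l1 ++ l2). split; auto. intros i Hi; apply in_app_or in Hi; destruct Hi; auto.
      + split; apply Fub; intros; apply Fin; apply in_or_app; auto. }
  assert (Hsup : le e (sup D)).
  { eapply (@le_trans _ _ _ HL); eauto. unfold pi_I. apply sup_le; auto.
    intros y [i [Hi ->]]. eapply (@le_trans _ _ _ HL); auto. apply (Fin (i :: nil)); simpl; auto.
    apply le_sup; auto. exists (i :: nil). split; auto. intros j [->|[]]; auto. }
  destruct (He D HD Hsup) as [d [[l [Hl ->]] Hed]].
  exists (fun j => In j l). split; [exists l; auto|]. split; auto.
  destruct (HDelta (fun j => In j l)) as [[Hsf Hle] _].
  apply (@le_trans _ _ _ HL _ (Delta (fun j => In j l) (F l))).
  { apply (@sf_mono _ _ _ HL _ Hsf); eauto. }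
  assert (Gen : forall l', (forall i, In i l' -> In i l) -> le (Delta (fun j => In j l) (F l')) c).
  { induction l' as [|a l' IH]; intros H; simpl.
    - destruct Hsf as [_ [Hb _]]. rewrite Hb. apply bot_le; auto.
    - destruct Hsf as [_ [_ Hj]]. rewrite Hj. apply join_lub; auto.
      + apply (@le_trans _ _ _ HL _ (s a (pi_i le sup s a c))); [|apply Hspi].
        apply Hle. apply H; simpl; auto.
      + apply IH; intros; apply H; simpl; auto. }
  apply Gen; auto.
Qed.
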